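(* Let $G=(V,E)$ be a simple connected undirected graph with $n\ge 2$ vertices and let $S$ be the output of Algorithm Stage-One on $G$. Then $S\setminus V(G(P_S))$ is an independent set of $G$, and every vertex of $S\setminus V(G(P_S))$ has a neighbor in $V\setminus S$.
   Context: For $v\in V$, $N(v)=\{u\in V:(u,v)\in E\}$; for $U\subseteq V$, $N(U)=\{v\in V\setminus U: v \text{ has a neighbor in } U\}$. Algorithm Stage-One: set $S_0=\emptyset$ and $h=0$. While $S_h$ is not a dominating set of $G$: increase $h$ by one; for each $v\in V\setminus S_{h-1}$ its active degree is $|N(v)\setminus (S_{h-1}\cup N(S_{h-1}))|$; if the maximum active degree over $V\setminus S_{h-1}$ is positive, let $v_h$ be any vertex of $V\setminus S_{h-1}$ of maximum active degree, otherwise let $v_h$ be any vertex of $V\setminus(S_{h-1}\cup N(S_{h-1}))$; set $S_h=S_{h-1}\cup\{v_h\}$. The output is $S=S_p=\{v_1,\dots,v_p\}$. For $h\in\{1,\dots,p\}$, let $S(h)=N(v_h)\setminus(S_{h-1}\cup N(S_{h-1}))$. The set of tied pairs is $P_S=\{(v_h,v): h\in\{1,\dots,p\},\ v\in S\cap S(h)\}$. $G(P_S)$ is the subgraph of $G$ whose edges are the tied pairs and whose vertices are the endpoints of tied pairs; $V(G(P_S))$ is its vertex set. An independent set is a set of pairwise non-adjacent vertices. *)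

(* Defs.v *)
From mathcomp Require Import all_boot.
Set Implicit Arguments. Unset Strict Implicit. Unset Printing Implicit Defensive.

Section Graph.
Variables (T : finType) (e : rel T).

Definition simple_graph := symmetric e /\ irreflexive e.
Definition connected_graph := forall x y : T, connect e x y.

Definition nbh (v : T) : {set T} := [set u | e u v].
Definition nbhS (U : {set T}) : {set T} :=
  [set v | (v \notin U) && [exists u in U, e u v]].

Definition dominating (D : {set T}) : bool := D :|: nbhS D == setT.

Definition active_deg (Sprev : {set T}) (v : T) : nat :=
  #|nbh v :\: (Sprev :|: nbhS Sprev)|.

(* v is a legal choice of v_h given S_{h-1} = Sprev *)
Definition legal_step (Sprev : {set T}) (v : T) : Prop :=
  v \notin Sprev /\
  ( ((exists2 w, w \notin Sprev & 0 < active_deg Sprev w) /\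
     (forall w, w \notin Sprev -> active_deg Sprev w <= active_deg Sprev v))
  \/
    ((forall w, w \notin Sprev -> active_deg Sprev w = 0) /\
     v \notin Sprev :|: nbhS Sprev) ).

(* stage_one_run Sprev s : starting from current set Sprev, the algorithm
   chooses successively the vertices of s and then stops. *)
Fixpoint stage_one_run (Sprev : {set T}) (s : seq T) : Prop :=
  match s with
  | [::] => dominating Sprev
  | v :: s' => ~~ dominating Sprev /\ legal_step Sprev v /\
               stage_one_run (v |: Sprev) s'
  end.

Definition stage_one_output (s : seq T) : Prop := stage_one_run set0 s.

Definition prefix_set (s : seq T) (h : nat) : {set T} := [set x in take h s].

(* S(h+1) (0-indexed h) = N(v_{h+1}) \ (S_h ∪ N(S_h)) *)
Definition Sof (s : seq T) (h : nat) (vh : T) : {set T} :=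
  nbh vh :\: (prefix_set s h :|: nbhS (prefix_set s h)).

(* (u, v) is a tied pair: u = v_h and v ∈ S ∩ S(h) for some h *)
Definition tied (s : seq T) (u v : T) : bool :=
  [exists h : 'I_(size s), (nth u s h == u) &&
     (v \in [set x in s] :&: Sof s h u)].

(* V(G(P_S)) : endpoints of tied pairs *)
Definition tied_vertices (s : seq T) : {set T} :=
  [set x | [exists y, tied s x y || tied s y x]].

Definition independent (I : {set T}) : Prop :=
  forall x y, x \in I -> y \in I -> ~~ e x y.

End Graph.

(* Main.v *)
Require Import Defs.
From mathcomp Require Import all_boot.

Lemma run_props (T : finType) (e : rel T) (s : seq T) (P : {set T}) :
  stage_one_run e P s ->
  [/\ uniq s, all (fun x => x \notin P) s &
   forall i x0, i < size s ->
     legal_step e (P :|: [set x in take i s]) (nth x0 s i)].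
Proof.
elim: s P => [|v s IH] P /=.
  by move=> _; split.
move=> [_ [Hl Hr]].
have [Hu Ha Hi] := IH _ Hr.
have HvP : v \notin P by case: Hl.
split.
- rewrite Hu andbT; apply/negP => Hv.
  by move/allP: Ha => /(_ v Hv); rewrite !inE eqxx.
- rewrite HvP /=; apply/allP => x Hx.
  move/allP: Ha => /(_ x Hx); rewrite !inE; by case/norP.
- case=> [|i] x0 Hi' /=.
    have -> : P :|: [set x in [::]] = P.
      by apply/setP => z; rewrite !inE orbF.
    exact: Hl.
  have -> : P :|: [set x in v :: take i s] = (v |: P) :|: [set x in take i s].
    apply/setP => z; rewrite !inE.
    by case: (z == v); case: (z \in P); case: (z \in take i s).
  by apply: Hi.
Qed.

Lemma earlier_tied (T : finType) (e : rel T) (s : seq T) (x0 : T) (j k : nat) :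
  symmetric e -> uniq s -> j < size s -> k < j ->
  e (nth x0 s k) (nth x0 s j) -> nth x0 s j \in tied_vertices e s.
Proof.
move=> sym Hu Hj Hk He.
set y := nth x0 s j.
have ex : exists k, (k < j) && e (nth x0 s k) y by exists k; rewrite Hk He.
case: (ex_minnP ex) => m /andP [Hmj Hme] Hmin.
have Hms : m < size s by apply: ltn_trans Hj.
rewrite inE; apply/existsP; exists (nth x0 s m); apply/orP; right.
apply/existsP; exists (Ordinal Hms) => /=.
rewrite (set_nth_default x0) // eqxx /=.
have Hys : y \in s by apply: mem_nth.
have Hyt : y \notin take m s.
  apply/negP => /index_ltn; rewrite /y index_uniq //.
  by move=> /(ltn_trans Hmj); rewrite ltnn.
rewrite !inE Hys /= negb_or.
rewrite sym Hme Hyt /= andbT.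
apply/existsP => [[u /andP [Hu1 Hu2]]].
rewrite inE in Hu1.
have Hus : u \in s by apply: mem_take Hu1.
have Hi := index_ltn Hu1.
move: Hu2; rewrite -(nth_index x0 Hus) => Hu2.
have := Hmin (index u s); rewrite Hu2 andbT.
have -> : index u s < j by apply: ltn_trans Hi Hmj.
by move=> /(_ isT); rewrite leqNgt Hi.
Qed.

Lemma has_nbr (T : finType) (e : rel T) (x : T) :
  connected_graph e -> 1 < #|T| -> exists w, e x w.
Proof.
move=> conn /card_gt1P [a [b [_ _ Hab]]].
have [z Hz] : exists z, z != x.
  case: (eqVneq a x) => [Hax|Hax]; last by exists a.
  by exists b; rewrite -Hax eq_sym.
move/connectP: (conn x z) => [[|w p] Hp Hl].
  by move: Hz; rewrite Hl /= eqxx.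
by exists w; move: Hp => /= /andP [].
Qed.

Theorem mainTheorem5 (T : finType) (e : rel T) (s : seq T) :
  simple_graph e -> connected_graph e -> 1 < #|T| ->
  stage_one_output e s ->
  let S := [set x in s] in
  independent e (S :\: tied_vertices e s) /\
  (forall x, x \in S :\: tied_vertices e s ->
     exists2 y, y \in ~: S & e x y).
Proof.
move=> [sym irr] conn cardT Hrun S.
have [Hu _ Hleg] := @run_props _ _ s set0 Hrun.
split.
  move=> x y; rewrite !inE => /andP [Hxt Hxs] /andP [Hyt Hys].
  apply/negP => Hxy.
  have Hi : index x s < size s by rewrite index_mem.
  have Hj : index y s < size s by rewrite index_mem.
  case: (ltngtP (index x s) (index y s)) => Hij.
  - have := @earlier_tied _ _ s x _ _ sym Hu Hj Hij.
    rewrite !nth_index // => H; move: (H Hxy); by rewrite inE (negbTE Hyt).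
  - have := @earlier_tied _ _ s x _ _ sym Hu Hi Hij.
    rewrite !nth_index // sym => H; move: (H Hxy); by rewrite inE (negbTE Hxt).
  - have Hxy' : x = y by rewrite -(nth_index x Hxs) -(nth_index x Hys) Hij.
    by move: Hxy; rewrite Hxy' irr.
move=> x; rewrite !inE => /andP [Hxt Hxs].
have Hi : index x s < size s by rewrite index_mem.
set i := index x s in Hi.
have := Hleg i x Hi; rewrite nth_index // set0U.
set Sp := [set x in take i s] => Hl.
have HxSp : x \notin Sp.
  by rewrite inE; apply/negP => /index_ltn; rewrite ltnn.
have HxN : x \notin nbhS e Sp.
  rewrite inE HxSp /=; apply/existsP => [[u /andP [Hu1 Hu2]]].
  rewrite inE in Hu1.
  have Hus : u \in s by apply: mem_take Hu1.
  have := @earlier_tied _ _ s x _ _ sym Hu Hi (index_ltn Hu1).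
  rewrite nth_index // nth_index // => /(_ Hu2).
  by rewrite inE (negbTE Hxt).
have [w Hw] := @has_nbr _ _ x conn cardT.
have HwSp : w \notin Sp.
  apply/negP => HwS; move/negP: HxN; apply; rewrite inE HxSp /=.
  by apply/existsP; exists w; rewrite HwS sym.
have Hxin : x \in nbh e w :\: (Sp :|: nbhS e Sp).
  by rewrite in_setD in_setU negb_or HxSp HxN inE Hw.
have Hpos : 0 < active_deg e Sp x.
  case: Hl => _ [[_ Hmax]|[Hz _]].
    apply: leq_trans (Hmax w HwSp).
    by apply/card_gt0P; exists x.
  have := Hz w HwSp; move/eqP; rewrite /active_deg cards_eq0 => /eqP H0.
  by move: Hxin; rewrite H0 inE.
move/card_gt0P: Hpos => [w' Hw'].
case: (boolP (w' \in s)) => Hw's.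
  exfalso; move/negP: Hxt; apply; apply/existsP; exists w'.
  apply/orP; left; apply/existsP; exists (Ordinal Hi) => /=.
  rewrite nth_index // eqxx /=.
  by rewrite inE inE Hw's /=.
exists w'; first by rewrite !inE.
by move: Hw'; rewrite !inE sym => /andP [_ ].
Qed.
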